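(* Let $m,n\ge 1$, $M=\{1,\dots,m\}$, $N=\{1,\dots,n\}$. (i) For BQAP1 with data $Q=(q_{ijk\ell})$ ($m\times n\times m\times n$) and $m\times n$ matrices $c,d$, the average $\mathcal{A}_1(Q,c,d)$ of the objective value $f_1(x,y)$ over all feasible solutions equals $$\mathcal{A}_1(Q,c,d)=\frac{1}{mn}\sum_{i=1}^m\sum_{j=1}^n\sum_{k=1}^m\sum_{\ell=1}^n q_{ijk\ell}+\frac{1}{n}\sum_{i=1}^m\sum_{j=1}^n c_{ij}+\frac{1}{m}\sum_{i=1}^m\sum_{j=1}^n d_{ij}.$$ (ii) For BQAP2 with data $Q=(q_{ijk\ell})$ ($m\times m\times n\times n$), an $m\times m$ matrix $c$ and an $n\times n$ matrix $d$, the average $\mathcal{A}_2(Q,c,d)$ of $f_2(x,y)$ over all feasible solutions equals $$\mathcal{A}_2(Q,c,d)=\frac{1}{mn}\sum_{i=1}^m\sum_{j=1}^m\sum_{k=1}^n\sum_{\ell=1}^n q_{ijk\ell}+\frac{1}{m}\sum_{i=1}^m\sum_{j=1}^m c_{ij}+\frac{1}{n}\sum_{i=1}^n\sum_{j=1}^n d_{ij}.$$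
   Context: BQAP1: the feasible solutions are pairs $(x,y)$ of $m\times n$ 0-1 matrices with $\sum_{j=1}^n x_{ij}=1$ for every $i\in M$ and $\sum_{i=1}^m y_{ij}=1$ for every $j\in N$ (there are $n^m m^n$ of them); the objective is $f_1(x,y)=\sum_{i,k\in M}\sum_{j,\ell\in N} q_{ijk\ell}x_{ij}y_{k\ell}+\sum_{i\in M,j\in N}c_{ij}x_{ij}+\sum_{i\in M,j\in N}d_{ij}y_{ij}$. BQAP2: feasible solutions are pairs $(x,y)$ with $x$ an $m\times m$ 0-1 matrix satisfying $\sum_{j=1}^m x_{ij}=1$ for all $i\in M$ and $y$ an $n\times n$ 0-1 matrix satisfying $\sum_{i=1}^n y_{ij}=1$ for all $j\in N$ (there are $m^m n^n$ of them); the objective is $f_2(x,y)=\sum_{i,j\in M}\sum_{k,\ell\in N} q_{ijk\ell}x_{ij}y_{k\ell}+\sum_{i,j\in M}c_{ij}x_{ij}+\sum_{i,j\in N}d_{ij}y_{ij}$. All data are real numbers. *)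

(* Defs.v *)
From HB Require Import structures.
From mathcomp Require Import all_boot all_order all_algebra.
Set Implicit Arguments. Unset Strict Implicit. Unset Printing Implicit Defensive.
Import Order.TTheory GRing.Theory Num.Theory.
Local Open Scope ring_scope.

(* 0-1 matrices are represented as boolean matrices; entry x i j is read as
   the number (x i j)%:R in {0,1}.  Indices 'I_m play the role of M = {1..m}. *)

Definition row_assign (p q : nat) (x : 'M[bool]_(p, q)) : bool :=
  [forall i : 'I_p, (\sum_(j < q) nat_of_bool (x i j) == 1)%N].

Definition col_assign (p q : nat) (y : 'M[bool]_(p, q)) : bool :=
  [forall j : 'I_q, (\sum_(i < p) nat_of_bool (y i j) == 1)%N].

Definition feas1 (m n : nat) (s : 'M[bool]_(m, n) * 'M[bool]_(m, n)) : bool :=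
  row_assign s.1 && col_assign s.2.

Definition f1 (R : numFieldType) (m n : nat)
  (q : 'I_m -> 'I_n -> 'I_m -> 'I_n -> R) (c d : 'M[R]_(m, n))
  (x y : 'M[bool]_(m, n)) : R :=
  \sum_(i < m) \sum_(k < m) \sum_(j < n) \sum_(l < n)
      q i j k l * (x i j)%:R * (y k l)%:R
  + \sum_(i < m) \sum_(j < n) c i j * (x i j)%:R
  + \sum_(i < m) \sum_(j < n) d i j * (y i j)%:R.

Definition avg1 (R : numFieldType) (m n : nat)
  (q : 'I_m -> 'I_n -> 'I_m -> 'I_n -> R) (c d : 'M[R]_(m, n)) : R :=
  (\sum_(s | feas1 s) f1 q c d s.1 s.2) / (#|[pred s | @feas1 m n s]|)%:R.

Definition feas2 (m n : nat) (s : 'M[bool]_m * 'M[bool]_n) : bool :=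
  row_assign s.1 && col_assign s.2.

Definition f2 (R : numFieldType) (m n : nat)
  (q : 'I_m -> 'I_m -> 'I_n -> 'I_n -> R) (c : 'M[R]_m) (d : 'M[R]_n)
  (x : 'M[bool]_m) (y : 'M[bool]_n) : R :=
  \sum_(i < m) \sum_(j < m) \sum_(k < n) \sum_(l < n)
      q i j k l * (x i j)%:R * (y k l)%:R
  + \sum_(i < m) \sum_(j < m) c i j * (x i j)%:R
  + \sum_(i < n) \sum_(j < n) d i j * (y i j)%:R.

Definition avg2 (R : numFieldType) (m n : nat)
  (q : 'I_m -> 'I_m -> 'I_n -> 'I_n -> R) (c : 'M[R]_m) (d : 'M[R]_n) : R :=
  (\sum_(s | feas2 s) f2 q c d s.1 s.2) / (#|[pred s | @feas2 m n s]|)%:R.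

(* Main.v *)
Require Import Defs.
From HB Require Import structures.
From mathcomp Require Import all_boot all_order all_algebra all_fingroup.
From mathcomp Require Import ring lra.
Import Order.TTheory GRing.Theory Num.Theory.
Local Open Scope ring_scope.

Section Aux.
Variable R : realFieldType.

Lemma row_assign_perm p q (s : {perm 'I_q}) (x : 'M[bool]_(p, q)) :
  row_assign (col_perm s x) = row_assign x.
Proof.
have E : forall i, (\sum_(j < q) nat_of_bool (col_perm s x i j) = \sum_(j < q) nat_of_bool (x i j))%N.
  move=> i; under eq_bigr do rewrite mxE.
  by rewrite (reindex_inj (@perm_inj _ s^-1)) /=; under eq_bigr do rewrite permKV.
by apply/forallP/forallP => H i; move: (H i); rewrite E.
Qed.

Lemma row_sum p q (x : 'M[bool]_(p, q)) i : row_assign x ->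
  \sum_(j < q) ((x i j)%:R : R) = 1.
Proof.
move=> /forallP /(_ i) /eqP H. by rewrite -natr_sum H.
Qed.

Lemma K1 p q (i : 'I_p) (j : 'I_q) :
  (\sum_(x : 'M[bool]_(p, q) | row_assign x) ((x i j)%:R : R)) *+ q =
  \sum_(x : 'M[bool]_(p, q) | row_assign x) 1.
Proof.
have E : forall j', \sum_(x : 'M[bool]_(p, q) | row_assign x) ((x i j')%:R : R) =
                   \sum_(x : 'M[bool]_(p, q) | row_assign x) ((x i j)%:R : R).
  move=> j'.
  have hinj : injective (@col_perm bool p q (tperm j j')).
    apply: (can_inj (g := col_perm (tperm j j'))) => x.
    by apply/matrixP => a b; rewrite !mxE tpermK.
  rewrite (reindex_inj hinj) /=.
  apply: eq_big => x; first by rewrite row_assign_perm.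
  by rewrite mxE tpermR.
transitivity (\sum_(j' < q) \sum_(x : 'M[bool]_(p, q) | row_assign x) ((x i j')%:R : R)).
  rewrite (eq_bigr _ (fun j' _ => E j')). by rewrite sumr_const card_ord.
rewrite exchange_big /=; apply: eq_bigr => x /row_sum ->; done.
Qed.

Lemma col_assign_tr p q (x : 'M[bool]_(q, p)) : col_assign x^T = row_assign x.
Proof.
apply: eq_forallb => i; by under eq_bigr do rewrite mxE.
Qed.

Lemma sum_tr p q (P : pred 'M[bool]_(p, q)) (F : 'M[bool]_(p, q) -> R) :
  \sum_(y | P y) F y = \sum_(x : 'M[bool]_(q, p) | P x^T) F x^T.
Proof.
rewrite (reindex (@trmx bool q p)) //.
by exists (@trmx bool p q) => x _; rewrite trmxK.
Qed.

Lemma K2 p q (i : 'I_p) (j : 'I_q) :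
  (\sum_(y : 'M[bool]_(p, q) | col_assign y) ((y i j)%:R : R)) *+ p =
  \sum_(y : 'M[bool]_(p, q) | col_assign y) 1.
Proof.
rewrite [in LHS]sum_tr [RHS]sum_tr.
under eq_bigl do rewrite col_assign_tr.
under [RHS]eq_bigl do rewrite col_assign_tr.
under eq_bigr do rewrite mxE.
exact: K1.
Qed.

Lemma rowA_wit p q : (0 < q)%N -> exists x : 'M[bool]_(p, q), row_assign x.
Proof.
case: q => [|q] hq; first by [].
exists (\matrix_(i, j) (nat_of_ord j == 0)%N).
apply/forallP => i; rewrite big_ord_recl.
rewrite (@big1 nat 0%N addn _ _ _ (fun j : 'I_q => nat_of_bool ((\matrix_(i, j) (nat_of_ord j == 0)%N : 'M[bool]_(p, q.+1)) i (lift ord0 j)))).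
  by rewrite mxE addn0.
by move=> j _; rewrite mxE.
Qed.

Lemma colA_wit p q : (0 < p)%N -> exists y : 'M[bool]_(p, q), col_assign y.
Proof.
move=> /(rowA_wit q) [x hx]; exists x^T; by rewrite col_assign_tr.
Qed.

Lemma sum1_pos (T : finType) (P : pred T) : (exists x, P x) -> 0 < \sum_(x | P x) (1 : R).
Proof.
case=> x0 hx0; rewrite (bigD1 x0); last by [].
apply: (lt_le_trans ltr01); rewrite lerDl; exact: sumr_ge0.
Qed.

Lemma sum4_lin (X : finType) (P : pred X) (I1 I2 I3 I4 : finType)
  (F : I1 -> I2 -> I3 -> I4 -> R) (g : X -> I1 -> I2 -> I3 -> I4 -> R) a :
  (forall i j k l, \sum_(x | P x) g x i j k l = a) ->
  \sum_(x | P x) \sum_(i : I1) \sum_(j : I2) \sum_(k : I3) \sum_(l : I4) F i j k l * g x i j k l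
  = (\sum_(i : I1) \sum_(j : I2) \sum_(k : I3) \sum_(l : I4) F i j k l) * a.
Proof.
move=> H.
rewrite exchange_big mulr_suml; apply: eq_bigr => i _.
rewrite exchange_big mulr_suml; apply: eq_bigr => j _.
rewrite exchange_big mulr_suml; apply: eq_bigr => k _.
rewrite exchange_big mulr_suml; apply: eq_bigr => l _.
by rewrite -mulr_sumr H.
Qed.

Lemma sum2_lin (X : finType) (P : pred X) (I1 I2 : finType)
  (F : I1 -> I2 -> R) (g : X -> I1 -> I2 -> R) a :
  (forall i j, \sum_(x | P x) g x i j = a) ->
  \sum_(x | P x) \sum_(i : I1) \sum_(j : I2) F i j * g x i j
  = (\sum_(i : I1) \sum_(j : I2) F i j) * a.
Proof.
move=> H.
rewrite exchange_big mulr_suml; apply: eq_bigr => i _.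
rewrite exchange_big mulr_suml; apply: eq_bigr => j _.
by rewrite -mulr_sumr H.
Qed.

Lemma sum_const_mul (X : finType) (P : pred X) (a : R) :
  \sum_(x | P x) a = a * \sum_(x | P x) 1.
Proof. by rewrite mulr_sumr; under [RHS]eq_bigr do rewrite mulr1. Qed.

Lemma card_sum (X : finType) (P : pred X) :
  (#|[pred s | P s]|%:R : R) = \sum_(s | P s) 1.
Proof. by rewrite sumr_const. Qed.

Lemma K1' p q (i : 'I_p) (j : 'I_q) : (0 < q)%N ->
  \sum_(x : 'M[bool]_(p, q) | row_assign x) ((x i j)%:R : R) =
  (\sum_(x : 'M[bool]_(p, q) | row_assign x) 1) / q%:R.
Proof.
move=> hq; have qnz : (q%:R : R) != 0 by rewrite pnatr_eq0 -lt0n.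
apply: (mulIf qnz); rewrite mulfVK // mulr_natr; exact: K1.
Qed.

Lemma K2' p q (i : 'I_p) (j : 'I_q) : (0 < p)%N ->
  \sum_(y : 'M[bool]_(p, q) | col_assign y) ((y i j)%:R : R) =
  (\sum_(y : 'M[bool]_(p, q) | col_assign y) 1) / p%:R.
Proof.
move=> hp; have qnz : (p%:R : R) != 0 by rewrite pnatr_eq0 -lt0n.
apply: (mulIf qnz); rewrite mulfVK // mulr_natr; exact: K2.
Qed.

End Aux.


Lemma part1 (R : realFieldType) (m n : nat) (hm : (0 < m)%N) (hn : (0 < n)%N)
  (q : 'I_m -> 'I_n -> 'I_m -> 'I_n -> R) (c d : 'M[R]_(m, n)) :
     avg1 q c d =
       (m * n)%:R^-1 * (\sum_(i < m) \sum_(j < n) \sum_(k < m) \sum_(l < n) q i j k l)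
       + n%:R^-1 * (\sum_(i < m) \sum_(j < n) c i j)
       + m%:R^-1 * (\sum_(i < m) \sum_(j < n) d i j).
Proof.
rewrite /avg1 (@card_sum R _ (@feas1 m n)).
rewrite -(pair_big_dep (fun x : 'M[bool]_(m, n) => row_assign x) (fun _ y => col_assign y) (fun x y => f1 q c d x y)).
rewrite -(pair_big_dep (fun x : 'M[bool]_(m, n) => row_assign x) (fun _ y => col_assign y) (fun x y => (1:R))).
set SA := \sum_(x : 'M[bool]_(m, n) | row_assign x) (1:R).
set SB := \sum_(y : 'M[bool]_(m, n) | col_assign y) (1:R).
rewrite sum_const_mul -/SA.
rewrite /f1.
under eq_bigr do rewrite !big_split /=.
rewrite !big_split /=.
have T1 : \sum_(x : 'M[bool]_(m, n) | row_assign x) \sum_(y : 'M[bool]_(m, n) | col_assign y)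
         \sum_(i1 < m) \sum_(k < m) \sum_(j < n) \sum_(l < n) q i1 j k l * (x i1 j)%:R * (y k l)%:R
   = (\sum_(i1 < m) \sum_(k < m) \sum_(j < n) \sum_(l < n) q i1 j k l) * (SA / n%:R) * (SB / m%:R).
  transitivity (\sum_(x : 'M[bool]_(m, n) | row_assign x)
     (\sum_(i1 < m) \sum_(k < m) \sum_(j < n) \sum_(l < n) q i1 j k l * (x i1 j)%:R) * (SB / m%:R)).
    apply: eq_bigr => x _.
    have L := @sum4_lin R _ _ _ _ _ _ (fun i1 k j l => q i1 j k l * (x i1 j)%:R) (fun (y : 'M[bool]_(m, n)) i1 k j l => (y k l)%:R). apply: L.
    move=> i1 k j l; exact: K2'.
  rewrite -mulr_suml; congr (_ * _).
  apply: (@sum4_lin R _ _ _ _ _ _ (fun i1 k j l => q i1 j k l) (fun (x : 'M[bool]_(m, n)) i1 k j l => (x i1 j)%:R)).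
  move=> i1 k j l; exact: K1'.
have T2 : \sum_(x : 'M[bool]_(m, n) | row_assign x) \sum_(y : 'M[bool]_(m, n) | col_assign y)
         \sum_(i1 < m) \sum_(j < n) c i1 j * (x i1 j)%:R
   = (\sum_(i1 < m) \sum_(j < n) c i1 j) * (SA / n%:R) * SB.
  under eq_bigr do rewrite sum_const_mul -/SB.
  rewrite -mulr_suml; congr (_ * _).
  apply: (@sum2_lin R _ _ _ _ (fun i1 j => c i1 j) (fun (x : 'M[bool]_(m, n)) i1 j => (x i1 j)%:R)).
  move=> i1 j; exact: K1'.
have T3 : \sum_(x : 'M[bool]_(m, n) | row_assign x) \sum_(y : 'M[bool]_(m, n) | col_assign y)
         \sum_(i1 < m) \sum_(j < n) d i1 j * (y i1 j)%:R
   = (\sum_(i1 < m) \sum_(j < n) d i1 j) * (SB / m%:R) * SA.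
  rewrite sum_const_mul -/SA; congr (_ * _).
  apply: (@sum2_lin R _ _ _ _ (fun i1 j => d i1 j) (fun (y : 'M[bool]_(m, n)) i1 j => (y i1 j)%:R)).
  move=> i1 j; exact: K2'.
rewrite T1 T2 T3.
have -> : \sum_(i1 < m) \sum_(k < m) \sum_(j < n) \sum_(l < n) q i1 j k l =
          \sum_(i < m) \sum_(j < n) \sum_(k < m) \sum_(l < n) q i j k l.
  by apply: eq_bigr => i _; rewrite exchange_big.
have hSA : SA != 0.
  by rewrite lt0r_neq0 //; apply: sum1_pos; apply: rowA_wit.
have hSB : SB != 0.
  by rewrite lt0r_neq0 //; apply: sum1_pos; apply: colA_wit.
have hm' : (m%:R : R) != 0 by rewrite pnatr_eq0 -lt0n.
have hn' : (n%:R : R) != 0 by rewrite pnatr_eq0 -lt0n.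
rewrite natrM.
field.
by rewrite hSA hSB hm' hn'.
Qed.

Lemma part2 (R : realFieldType) (m n : nat) (hm : (0 < m)%N) (hn : (0 < n)%N)
  (q : 'I_m -> 'I_m -> 'I_n -> 'I_n -> R) (c : 'M[R]_m) (d : 'M[R]_n) :
     avg2 q c d =
       (m * n)%:R^-1 * (\sum_(i < m) \sum_(j < m) \sum_(k < n) \sum_(l < n) q i j k l)
       + m%:R^-1 * (\sum_(i < m) \sum_(j < m) c i j)
       + n%:R^-1 * (\sum_(i < n) \sum_(j < n) d i j).
Proof.
rewrite /avg2 (@card_sum R _ (@feas2 m n)).
rewrite -(pair_big_dep (fun x : 'M[bool]_m => row_assign x) (fun _ (y : 'M[bool]_n) => col_assign y) (fun x y => f2 q c d x y)).
rewrite -(pair_big_dep (fun x : 'M[bool]_m => row_assign x) (fun _ (y : 'M[bool]_n) => col_assign y) (fun x y => (1:R))).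
set SA := \sum_(x : 'M[bool]_m | row_assign x) (1:R).
set SB := \sum_(y : 'M[bool]_n | col_assign y) (1:R).
rewrite sum_const_mul -/SA.
rewrite /f2.
under eq_bigr do rewrite !big_split /=.
rewrite !big_split /=.
have T1 : \sum_(x : 'M[bool]_m | row_assign x) \sum_(y : 'M[bool]_n | col_assign y)
         \sum_(i < m) \sum_(j < m) \sum_(k < n) \sum_(l < n) q i j k l * (x i j)%:R * (y k l)%:R
   = (\sum_(i < m) \sum_(j < m) \sum_(k < n) \sum_(l < n) q i j k l) * (SA / m%:R) * (SB / n%:R).
  transitivity (\sum_(x : 'M[bool]_m | row_assign x)
     (\sum_(i < m) \sum_(j < m) \sum_(k < n) \sum_(l < n) q i j k l * (x i j)%:R) * (SB / n%:R)).
    apply: eq_bigr => x _.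
    have L := (@sum4_lin R _ _ _ _ _ _ (fun i j k l => q i j k l * (x i j)%:R) (fun (y : 'M[bool]_n) i j k l => (y k l)%:R)). apply: L.
    move=> i j k l; exact: K2'.
  rewrite -mulr_suml; congr (_ * _).
  apply: (@sum4_lin R _ _ _ _ _ _ (fun i j k l => q i j k l) (fun (x : 'M[bool]_m) i j k l => (x i j)%:R)).
  move=> i j k l; exact: K1'.
have T2 : \sum_(x : 'M[bool]_m | row_assign x) \sum_(y : 'M[bool]_n | col_assign y)
         \sum_(i < m) \sum_(j < m) c i j * (x i j)%:R
   = (\sum_(i < m) \sum_(j < m) c i j) * (SA / m%:R) * SB.
  under eq_bigr do rewrite sum_const_mul -/SB.
  rewrite -mulr_suml; congr (_ * _).
  apply: (@sum2_lin R _ _ _ _ (fun i j => c i j) (fun (x : 'M[bool]_m) i j => (x i j)%:R)).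
  move=> i j; exact: K1'.
have T3 : \sum_(x : 'M[bool]_m | row_assign x) \sum_(y : 'M[bool]_n | col_assign y)
         \sum_(i < n) \sum_(j < n) d i j * (y i j)%:R
   = (\sum_(i < n) \sum_(j < n) d i j) * (SB / n%:R) * SA.
  rewrite sum_const_mul -/SA; congr (_ * _).
  apply: (@sum2_lin R _ _ _ _ (fun i j => d i j) (fun (y : 'M[bool]_n) i j => (y i j)%:R)).
  move=> i j; exact: K2'.
rewrite T1 T2 T3.
have hSA : SA != 0.
  by rewrite lt0r_neq0 //; apply: sum1_pos; apply: rowA_wit.
have hSB : SB != 0.
  by rewrite lt0r_neq0 //; apply: sum1_pos; apply: colA_wit.
have hm' : (m%:R : R) != 0 by rewrite pnatr_eq0 -lt0n.
have hn' : (n%:R : R) != 0 by rewrite pnatr_eq0 -lt0n.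
rewrite natrM.
field.
by rewrite hSA hSB hm' hn'.
Qed.


Theorem theorem1 (R : realFieldType) (m n : nat) (hm : (0 < m)%N) (hn : (0 < n)%N) :
  (forall (q : 'I_m -> 'I_n -> 'I_m -> 'I_n -> R) (c d : 'M[R]_(m, n)),
     avg1 q c d =
       (m * n)%:R^-1 * (\sum_(i < m) \sum_(j < n) \sum_(k < m) \sum_(l < n) q i j k l)
       + n%:R^-1 * (\sum_(i < m) \sum_(j < n) c i j)
       + m%:R^-1 * (\sum_(i < m) \sum_(j < n) d i j))
  /\
  (forall (q : 'I_m -> 'I_m -> 'I_n -> 'I_n -> R) (c : 'M[R]_m) (d : 'M[R]_n),
     avg2 q c d =
       (m * n)%:R^-1 * (\sum_(i < m) \sum_(j < m) \sum_(k < n) \sum_(l < n) q i j k l)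
       + m%:R^-1 * (\sum_(i < m) \sum_(j < m) c i j)
       + n%:R^-1 * (\sum_(i < n) \sum_(j < n) d i j)).
Proof.
split=> q c d; [exact: part1 | exact: part2].
Qed.
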